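(* (Extended Lucas Theorem.) Let $n$ be a prime, let $m \geq n$ be an integer and let $k$ be an integer with $0 \leq k \leq m$. Write $m=\sum_{i=0}^r m_i n^i$ and $k=\sum_{i=0}^r k_i n^i$ in base $n$, where $r$ is a suitable nonnegative integer and $0 \leq m_i < n$, $0 \leq k_i < n$ are integers for each $i=0,1,\dots,r$. For each $i$ set $t_i=\min\{k_i,\, m_i-k_i\}$ and define \[ \binom{m_i}{t_i}_n := \begin{cases} (-1)^{t_i} \binom{n-1-m_i+t_i}{n-1-m_i} , & \text{if } m_i+t_i > n- 1,\\ (-1)^{t_i} \binom{n-1-m_i+t_i}{t_i}, & \text{if } m_i+t_i \leq n- 1 \text{ and } 2 m_i > n-1 +t_i,\\ \binom{m_i}{t_i}, & \text{otherwise}. \end{cases} \] Then \[ \binom{m}{k} \equiv \binom{m_r}{t_r}_n \binom{m-m_r n^r}{k-k_r n^r} \pmod{n}, \] and moreover \[ \binom{m}{k} \equiv \binom{m_r}{t_r}_n \binom{m_{r-1}}{t_{r-1}}_n \cdots \binom{m_1}{t_1}_n \binom{m_0}{t_0}_n \pmod{n}. \]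
   Context: Binomial coefficients $\binom{a}{b}$ with integer $a\ge 0$ follow the usual convention that $\binom{a}{b}=0$ if $b<0$ or $b>a$. *)

(* Defs.v *)
From mathcomp Require Import all_boot all_order all_algebra.
Set Implicit Arguments. Unset Strict Implicit. Unset Printing Implicit Defensive.
Import Order.TTheory GRing.Theory Num.Theory.
Local Open Scope ring_scope.

Definition binZ (a b : int) : int :=
  if (0 <= a) && (0 <= b) then ('C(`|a|%N, `|b|%N))%:Z else 0.

Definition genbin (n mi ki : nat) : int :=
  let t : int := Num.min (ki%:Z) (mi%:Z - ki%:Z) in
  let N1 : int := (n%:Z - 1) in
  if (mi%:Z + t > N1) then (-1) ^+ `|t|%N * binZ (N1 - mi%:Z + t) (N1 - mi%:Z)
  else if (2 * mi%:Z > N1 + t) then (-1) ^+ `|t|%N * binZ (N1 - mi%:Z + t) t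
  else binZ (mi%:Z) t.

(* Main.v *)
Require Import Defs.
From mathcomp Require Import all_boot all_order all_algebra zify ring.
Set Implicit Arguments. Unset Strict Implicit. Unset Printing Implicit Defensive.
Import Order.TTheory GRing.Theory Num.Theory.

Lemma binp_mod p j : prime p -> 'C(p, j) = (j == 0) + (j == p) %[mod p].
Proof.
move=> pP; have p_gt1 := prime_gt1 pP.
case: j => [|j]; first by rewrite bin0 /= eq_sym gtn_eqF // ?(ltnW p_gt1).
case: (ltngtP j.+1 p) => hj.
- by rewrite (eqP (prime_dvd_bin pP _)) ?hj ?mod0n // (gtn_eqF hj).
- by rewrite bin_small // (ltn_eqF hj).
- by rewrite -hj binn.
Qed.

Lemma sum_eq_mul (F : nat -> nat) (a n : nat) :
  \sum_(j < n) (nat_of_ord j == a) * F j = (a < n) * F a.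
Proof.
elim: n => [|n IH]; first by rewrite big_ord0.
rewrite big_ord_recr /= IH (ltnS a n) (leq_eqVlt a n) [n == a]eq_sym.
by case: (ltngtP a n) => h /=; rewrite ?addn0 ?add0n ?mul0n ?mul1n // h.
Qed.

Lemma step p N K : prime p ->
  'C(p + N, K) = 'C(N, K) + (p <= K) * 'C(N, K - p) %[mod p].
Proof.
move=> pP; rewrite -binomial.Vandermonde -modn_summ.
rewrite (eq_bigr (fun j : 'I_K.+1 => ((nat_of_ord j == 0) + (nat_of_ord j == p)) * 'C(N, K - j) %% p)); last first.
  by move=> j _; rewrite -modnMml binp_mod // modnMml.
rewrite modn_summ.
rewrite (eq_bigr (fun j : 'I_K.+1 => (nat_of_ord j == 0) * 'C(N, K - j) + (nat_of_ord j == p) * 'C(N, K - j))); last first.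
  by move=> j _; rewrite mulnDl.
rewrite big_split /=.
rewrite (sum_eq_mul (fun j => 'C(N, K - j))) (sum_eq_mul (fun j => 'C(N, K - j))).
by rewrite subn0 mul1n.
Qed.

Lemma lucas1 p a b c d : prime p -> c < p -> d < p ->
  'C(a * p + c, b * p + d) = 'C(a, b) * 'C(c, d) %[mod p].
Proof.
move=> pP hc hd.
elim: a b => [|a IH] b.
  rewrite mul0n add0n; case: b => [|b]; first by rewrite mul0n add0n bin0 mul1n.
  rewrite bin_small ?bin0n //; apply: leq_trans hc _.
  by rewrite mulSn -addnA leq_addr.
have E : a.+1 * p + c = p + (a * p + c) by rewrite mulSn addnA.
rewrite E step //.
case: b => [|b].
  rewrite mul0n add0n leqNgt hd /= mul0n addn0 (bin0 a.+1) mul1n.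
  by have := IH 0; rewrite mul0n add0n; move->; rewrite bin0 mul1n.
have E2 : b.+1 * p + d = p + (b * p + d) by rewrite mulSn addnA.
rewrite E2 leq_addr mul1n addKn -modnDm -E2 IH (IH b) modnDm.
by rewrite binS mulnDl.
Qed.

Lemma lucasr p r a b c d : prime p -> c < p ^ r -> d < p ^ r ->
  'C(a * p ^ r + c, b * p ^ r + d) = 'C(a, b) * 'C(c, d) %[mod p].
Proof.
move=> pP; have p_gt0 := prime_gt0 pP.
elim: r a b c d => [|r IH] a b c d.
  rewrite expn0 !ltnS !leqn0 => /eqP -> /eqP ->.
  by rewrite !muln1 !addn0.
move=> hc hd.
have hc1 : c %/ p < p ^ r by rewrite ltn_divLR // -expnSr.
have hd1 : d %/ p < p ^ r by rewrite ltn_divLR // -expnSr.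
have Ec : a * p ^ r.+1 + c = (a * p ^ r + c %/ p) * p + c %% p.
  by rewrite {1}(divn_eq c p) mulnDl expnSr mulnA addnA.
have Ed : b * p ^ r.+1 + d = (b * p ^ r + d %/ p) * p + d %% p.
  by rewrite {1}(divn_eq d p) mulnDl expnSr mulnA addnA.
have Lc : 'C(c, d) = 'C(c %/ p, d %/ p) * 'C(c %% p, d %% p) %[mod p].
  by rewrite {1}(divn_eq c p) {1}(divn_eq d p) lucas1 ?ltn_pmod.
rewrite Ec Ed lucas1 ?ltn_pmod // -modnMml IH // modnMml.
by rewrite -mulnA -modnMmr -Lc modnMmr.
Qed.

Lemma digsum_lt p (md : nat -> nat) j : 0 < p -> (forall i, i < j -> md i < p) ->
  \sum_(i < j) md i * p ^ i < p ^ j.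
Proof.
move=> p0; elim: j => [|j IH] h; first by rewrite big_ord0 expn0.
rewrite big_ord_recr /=.
have h1 := IH (fun i hi => h i (ltnW hi)).
have h2 : (md j).+1 * p ^ j <= p ^ j.+1 by rewrite expnS leq_mul2r h // orbT.
apply: leq_trans h2; by rewrite mulSn ltn_add2r.
Qed.

Lemma lucas_full p (md kd : nat -> nat) j : prime p ->
  (forall i, i < j -> md i < p) -> (forall i, i < j -> kd i < p) ->
  'C(\sum_(i < j) md i * p ^ i, \sum_(i < j) kd i * p ^ i)
    = \prod_(i < j) 'C(md i, kd i) %[mod p].
Proof.
move=> pP; have p0 := prime_gt0 pP.
elim: j => [|j IH] hm hk; first by rewrite !big_ord0.
rewrite !big_ord_recr /= [X in 'C(X, _)]addnC [X in 'C(_, X)]addnC.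
rewrite lucasr ?digsum_lt // => [|i hi|i hi]; last by apply: hk; apply: ltnW.
  by rewrite -modnMmr IH ?modnMmr 1?mulnC // => i hi; [apply: hm|apply: hk]; apply: ltnW.
by apply: hm; apply: ltnW.
Qed.

Local Open Scope ring_scope.

Lemma binZ_nat (a b : nat) : binZ a%:Z b%:Z = ('C(a, b))%:Z.
Proof. by rewrite /binZ. Qed.

Lemma binZ_neg (a b : int) : b < 0 -> binZ a b = 0.
Proof. by rewrite /binZ => hb; rewrite (leNgt 0 b) hb andbF. Qed.

Lemma natZ_mod0 (p x : nat) : (x %% p = 0)%N -> ((x%:Z) %% p%:Z)%Z = 0.
Proof. by move=> h; rewrite modz_nat h. Qed.

Lemma key p mi t : prime p -> (mi < p)%N -> (t < p)%N ->
  ((-1) ^+ t * ('C(p.-1 - mi + t, t))%:Z = ('C(mi, t))%:Z %[mod p%:Z])%Z.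
Proof.
move=> pP; have p0 := prime_gt0 pP.
elim: mi t => [|mi IH] t hm ht.
  case: t ht => [|t] ht; first by rewrite expr0 mul1r !bin0.
  rewrite bin0n /= -modzMmr.
  have -> : (p.-1 - 0 + t.+1 = p + t)%N by lia.
  have H : ('C(p + t, t.+1) %% p = 0)%N.
    have := step t t.+1 pP; rewrite leqNgt ht /= mul0n addn0 (bin_small (ltnSn t)) mod0n; exact.
  by rewrite natZ_mod0 ?mulr0 ?mod0z.
case: t ht => [|t] ht.
  by rewrite !bin0 GRing.expr0 mul1r.
have E1 : (p.-1 - mi.+1 + t.+1 = p.-1 - mi + t)%N by lia.
have E2 : (p.-1 - mi + t.+1 = (p.-1 - mi + t).+1)%N by lia.
have I1 := IH t.+1 (ltnW hm) ht.
have I2 := IH t (ltnW hm) (ltnW ht).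
rewrite E2 in I1.
rewrite E1 binS PoszD -modzDm -I1 -I2 modzDm binS PoszD exprS.
congr (_ %% _)%Z; ring.
Qed.

Lemma genbin_ok p mi ki : prime p -> (mi < p)%N -> (ki < p)%N ->
  (genbin p mi ki = ('C(mi, ki))%:Z %[mod p%:Z])%Z.
Proof.
move=> pP hm hk; have p0 := prime_gt0 pP.
rewrite /genbin /=.
case: (leqP ki mi) => h; last first.
  have ht : Num.min (ki%:Z) (mi%:Z - ki%:Z) = mi%:Z - ki%:Z.
    by rewrite minEle; case: leP => ?; lia.
  rewrite ht (bin_small h).
  have -> : (mi%:Z + (mi%:Z - ki%:Z) > p%:Z - 1) = false by apply/negbTE; rewrite -leNgt; lia.
  rewrite !binZ_neg ?mulr0; try lia.
  by case: ifP.
set tn := minn ki (mi - ki).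
have ht : Num.min (ki%:Z) (mi%:Z - ki%:Z) = tn%:Z.
  by rewrite /tn minEle; case: leP => ?; lia.
have HC : 'C(mi, ki) = 'C(mi, tn).
  rewrite /tn /minn; case: ltnP => hh //.
  by rewrite bin_sub.
have tnp : (tn < p)%N by rewrite /tn; apply: leq_ltn_trans (geq_minl _ _) hk.
have tnm : (tn <= mi)%N by rewrite /tn; apply: leq_trans (geq_minr _ _) (leq_subr _ _).
have K := key pP hm tnp.
have EN : p%:Z - 1 - mi%:Z + tn%:Z = (p.-1 - mi + tn)%N%:Z by lia.
rewrite ht HC absz_nat EN.
case: ifP => _.
  have -> : p%:Z - 1 - mi%:Z = (p.-1 - mi)%N%:Z by lia.
  rewrite binZ_nat -K; congr (_ * _ %% _)%Z; congr Posz.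
  have e : (p.-1 - mi = (p.-1 - mi + tn) - tn)%N by rewrite addnK.
  by rewrite [X in 'C(_, X)]e bin_sub // leq_addl.
case: ifP => _; first by rewrite binZ_nat.
by rewrite binZ_nat.
Qed.

Lemma natmodZ (a b p : nat) : (a = b %[mod p])%N -> (a%:Z = b%:Z %[mod p%:Z])%Z.
Proof. by move=> h; rewrite !modz_nat h. Qed.

Lemma prod_genbin p (md kd : nat -> nat) j : prime p ->
  (forall i, (i < j)%N -> (md i < p)%N) -> (forall i, (i < j)%N -> (kd i < p)%N) ->
  (\prod_(i < j) genbin p (md i) (kd i)
    = (\prod_(i < j) 'C(md i, kd i))%N%:Z %[mod p%:Z])%Z.
Proof.
move=> pP; elim: j => [|j IH] hm hk; first by rewrite !big_ord0.
rewrite !big_ord_recr /= PoszM -modzMml IH; last 2 first.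
- by move=> i hi; apply: hm; apply: ltnW.
- by move=> i hi; apply: hk; apply: ltnW.
by rewrite modzMml -modzMmr genbin_ok ?hm ?hk // modzMmr.
Qed.

Local Close Scope ring_scope.

Theorem theorem1p2 (n m k r : nat) (md kd : nat -> nat) :
  prime n -> n <= m -> k <= m ->
  (forall i, (i <= r)%N -> md i < n) ->
  (forall i, (i <= r)%N -> kd i < n) ->
  m = \sum_(i < r.+1) md i * n ^ i ->
  k = \sum_(i < r.+1) kd i * n ^ i ->
  (('C(m, k))%:Z = genbin n (md r) (kd r)
        * ('C(m - md r * n ^ r, k - kd r * n ^ r))%:Z %[mod n%:Z])%Z /\
  (('C(m, k))%:Z = \prod_(i < r.+1) genbin n (md i) (kd i) %[mod n%:Z])%Z.
Proof.
move=> pP _ _ hm hk Em Ek.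
have hm' : forall i, (i < r.+1)%N -> (md i < n)%N by move=> i; rewrite ltnS; apply: hm.
have hk' : forall i, (i < r.+1)%N -> (kd i < n)%N by move=> i; rewrite ltnS; apply: hk.
have p0 := prime_gt0 pP.
split; last first.
  rewrite prod_genbin // Em Ek; apply: natmodZ; exact: lucas_full.
have Em' : (m - md r * n ^ r = \sum_(i < r) md i * n ^ i)%N by rewrite Em big_ord_recr /= addnK.
have Ek' : (k - kd r * n ^ r = \sum_(i < r) kd i * n ^ i)%N by rewrite Ek big_ord_recr /= addnK.
rewrite Em' Ek' Em Ek !big_ord_recr /= [X in 'C(X, _)]addnC [X in 'C(_, X)]addnC.
have L := lucasr (md r) (kd r) pP (@digsum_lt n md r p0 (fun i hi => hm' i (ltnW hi)))
  (@digsum_lt n kd r p0 (fun i hi => hk' i (ltnW hi))).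
by rewrite (natmodZ L) PoszM -modzMml -genbin_ok ?hm ?hk // modzMml.
Qed.
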